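(* Let $\Phi\colon\mathbb{R}^d\to\mathbb{R}$ be a continuously differentiable convex function with $(L_\Phi,v)$-Hölder continuous gradient ($\|\nabla\Phi(y)-\nabla\Phi(x)\|\le L_\Phi\|y-x\|^v$ for all $x,y$, with $L_\Phi>0$, $v\in(0,1]$), let $h\colon\mathbb{R}^d\to\mathbb{R}$ be an $L_h$-Lipschitz continuous convex function, and let $f=\Phi+h$. Assume $f$ has a minimizer $x^*$ over $\mathbb{R}^d$, with $f^*=f(x^* )$. Let $g_h(x)\in\partial h(x)$ be an arbitrary subgradient, and consider the iteration $$x_{k+1}=x_k-\alpha_k\frac{\nabla\Phi(x_k)+g_h(x_k)}{\|\nabla\Phi(x_k)+g_h(x_k)\|}$$ from $x_0\in\mathbb{R}^d$, with constant step size $\alpha_k=\|x_0-x^*\|/\sqrt{T+1}$ for a fixed $T\ge0$. Then $$\min_{k=0,\dots,T}\{f(x_k)-f^*\}\le\frac{L_\Phi\|x_0-x^*\|^{v+1}}{(v+1)(T+1)^{(v+1)/2}}+\frac{2L_h\|x_0-x^*\|}{\sqrt{T+1}}.$$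
   Context: $\partial h(x)=\{g: h(y)\ge h(x)+g^T(y-x)\ \forall y\in\mathbb{R}^d\}$. The iteration is well-defined until a minimizer is found (the denominator vanishes only at a minimizer, in which case the bound holds trivially). *)

(* Defs.v *)
From HB Require Import structures.
From mathcomp Require Import all_boot all_order all_algebra.
From mathcomp Require Import all_classical all_reals all_analysis.
Set Implicit Arguments. Unset Strict Implicit. Unset Printing Implicit Defensive.
Import Order.TTheory GRing.Theory Num.Theory.
Import numFieldNormedType.Exports.
Local Open Scope ring_scope.

Definition dotv {R : realType} {d : nat} (u w : 'rV[R]_d) : R :=
  \sum_(i < d) u 0 i * w 0 i.
Definition norm2 {R : realType} {d : nat} (u : 'rV[R]_d) : R :=
  Num.sqrt (dotv u u).

Definition convex_fun {R : realType} {d : nat} (F : 'rV[R]_d -> R) : Prop :=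
  forall (x y : 'rV[R]_d) (t : R), 0 <= t -> t <= 1 ->
    F (t *: x + (1 - t) *: y) <= t * F x + (1 - t) * F y.

Definition is_gradient {R : realType} {d : nat} (F : 'rV[R]_d -> R)
  (G : 'rV[R]_d -> 'rV[R]_d) : Prop :=
  forall x, differentiable F x /\ ('d F x : 'rV[R]_d -> R) = dotv (G x).

Definition subgradient {R : realType} {d : nat} (H : 'rV[R]_d -> R)
  (x g : 'rV[R]_d) : Prop :=
  forall y, H x + dotv g (y - x) <= H y.

(* Main.v *)
Require Import Defs.
From HB Require Import structures.
From mathcomp Require Import all_boot all_order all_algebra.
From mathcomp Require Import all_classical all_reals all_analysis.
From mathcomp Require Import ring lra.
Import Order.TTheory GRing.Theory Num.Theory.
Import numFieldNormedType.Exports.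
Local Open Scope ring_scope.
Set Implicit Arguments. Unset Strict Implicit. Unset Printing Implicit Defensive.

Section Dot.
Variables (R : realType) (d : nat).
Implicit Types (u w z : 'rV[R]_d).
Lemma mself_ge0 (x : R) : 0 <= x * x.
Proof. by rewrite -expr2 sqr_ge0. Qed.

Lemma dotvDl u w z : dotv (u + w) z = dotv u z + dotv w z.
Proof. by rewrite /dotv -big_split; apply: eq_bigr => i _; rewrite !mxE mulrDl. Qed.
Lemma dotvZl a u w : dotv (a *: u) w = a * dotv u w.
Proof. by rewrite /dotv mulr_sumr; apply: eq_bigr => i _; rewrite !mxE mulrA. Qed.
Lemma dotvC u w : dotv u w = dotv w u.
Proof. by apply: eq_bigr => i _; rewrite mulrC. Qed.
Lemma dotvDr u w z : dotv z (u + w) = dotv z u + dotv z w.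
Proof. by rewrite dotvC dotvDl !(dotvC z). Qed.
Lemma dotvZr a u w : dotv w (a *: u) = a * dotv w u.
Proof. by rewrite dotvC dotvZl dotvC. Qed.
Lemma dotvNl u w : dotv (- u) w = - dotv u w.
Proof. by rewrite -scaleN1r dotvZl mulN1r. Qed.
Lemma dotvNr u w : dotv w (- u) = - dotv w u.
Proof. by rewrite dotvC dotvNl dotvC. Qed.
Lemma dotvBl u w z : dotv (u - w) z = dotv u z - dotv w z.
Proof. by rewrite dotvDl dotvNl. Qed.
Lemma dotvBr u w z : dotv z (u - w) = dotv z u - dotv z w.
Proof. by rewrite dotvDr dotvNr. Qed.
Lemma dotv_ge0 u : 0 <= dotv u u.
Proof. by apply: sumr_ge0 => i _; exact: mself_ge0. Qed.
Lemma dotv0 u : dotv u u = 0 -> u = 0.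
Proof.
move=> h; apply/matrixP => i j; rewrite (ord1 i) mxE.
have := @psumr_eq0P R _ xpredT (fun k => u 0 k * u 0 k) (fun k _ => mself_ge0 (u 0 k)) h j isT.
by move/eqP; rewrite mulf_eq0 orbb => /eqP.
Qed.
Lemma dot0v w : dotv 0 w = 0.
Proof. by rewrite -(scale0r 0) dotvZl mul0r. Qed.
Lemma norm2_ge0 u : 0 <= norm2 u.
Proof. exact: sqrtr_ge0. Qed.
Lemma norm2_sq u : norm2 u ^+ 2 = dotv u u.
Proof. by rewrite sqr_sqrtr // dotv_ge0. Qed.
Lemma norm2_eq0 u : norm2 u = 0 -> u = 0.
Proof. by move=> h; apply: dotv0; rewrite -norm2_sq h expr0n. Qed.
Lemma norm2Z a u : 0 <= a -> norm2 (a *: u) = a * norm2 u.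
Proof.
move=> a0; rewrite /norm2 dotvZl dotvZr mulrA sqrtrM ?mself_ge0 //.
by rewrite -expr2 sqrtr_sqr ger0_norm.
Qed.
Lemma CS u w : dotv u w <= norm2 u * norm2 w.
Proof.
have [a0|an0] := eqVneq (norm2 u) 0.
  by rewrite a0 (norm2_eq0 a0) dot0v mul0r.
have [b0|bn0] := eqVneq (norm2 w) 0.
  by rewrite b0 (norm2_eq0 b0) dotvC dot0v mulr0.
have ha : 0 < norm2 u by rewrite lt0r an0 norm2_ge0.
have hb : 0 < norm2 w by rewrite lt0r bn0 norm2_ge0.
have := dotv_ge0 (norm2 w *: u - norm2 u *: w).
rewrite !dotvBl !dotvBr !dotvZl !dotvZr -!norm2_sq (dotvC w u).
move=> h; have hab : 0 < norm2 u * norm2 w by apply: mulr_gt0.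
nra.
Qed.
End Dot.


Section Calc.
Variables (R : realType) (d : nat) (Phi : 'rV[R]_d -> R) (G : 'rV[R]_d -> 'rV[R]_d).
Hypothesis hG : is_gradient Phi G.

Lemma phi_derive (x w : 'rV[R]_d) (t : R) :
  is_derive t 1 (fun s : R => Phi (x + s *: w)) (dotv (G (x + t *: w)) w).
Proof.
have key : (fun h : R => h^-1 *: (((fun s : R => Phi (x + s *: w)) \o shift t) (h *: 1) - Phi (x + t *: w)))
  = (fun h : R => h^-1 *: ((Phi \o shift (x + t *: w)) (h *: w) - Phi (x + t *: w))).
  apply/funext => h /=; congr (_ *: (Phi _ - _)).
  by rewrite /= [h *: 1]mulr1 scalerDl addrCA.
have [dx dG] := hG (x + t *: w).
split; first by rewrite /derivable key; exact: diff_derivable.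
rewrite /derive key; have := deriveE w dx; rewrite /derive => ->.
by rewrite dG.
Qed.

Lemma phi_cont (x w : 'rV[R]_d) (t : R) : {for t, continuous (fun s : R => Phi (x + s *: w))}.
Proof.
apply: differentiable_continuous; apply/derivable1_diffP.
by case: (phi_derive x w t).
Qed.

Lemma norm2N (u : 'rV[R]_d) : norm2 (- u) = norm2 u.
Proof. by rewrite /norm2 dotvNl dotvNr opprK. Qed.

Lemma CSabs (u w : 'rV[R]_d) : `|dotv u w| <= norm2 u * norm2 w.
Proof.
rewrite ler_norml; apply/andP; split; last exact: CS.
have := CS (- u) w; rewrite dotvNl norm2N; lra.
Qed.

Lemma descent (L v s : R) (x w : 'rV[R]_d) : (s = 1 \/ s = -1) -> 0 < v ->
  (forall x y, norm2 (G y - G x) <= L * powR (norm2 (y - x)) v) ->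
  s * (Phi (x + w) - Phi x - dotv (G x) w) <= L / (1 + v) * powR (norm2 w) (1 + v).
Proof.
move=> hs v0 hH.
set a := dotv (G x) w. set p := 1 + v. set c := L / p * powR (norm2 w) p.
have p0 : 0 < p by rewrite /p; lra.
pose A := fun t : R => s * (Phi (x + t *: w) - a * t).
pose Q := fun t : R => powR t p.
have dA (t : R) : is_derive t 1 A (s * (dotv (G (x + t *: w)) w - a)).
  have h1 := is_deriveZ s (is_deriveB (phi_derive x w t) (is_deriveZ a (@is_derive_id _ _ t 1))).
  apply: (is_derive_eq (f := A) h1).
  by rewrite /GRing.scale /= mulr1.
have dQ (t : R) : 0 < t -> is_derive t 1 Q (p * powR t (p - 1)).
  by move=> t0; exact: is_derive1_powR.
have contA (t : R) : {for t, continuous A}.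
  apply: differentiable_continuous; apply/derivable1_diffP.
  by case: (dA t).
pose df := fun t : R => s * (dotv (G (x + t *: w)) w - a) - c *: (p * powR t (p - 1)).
have hdf (t : R) : 0 < t -> is_derive t 1 (A - c \*: Q) (df t).
  by move=> t0; exact: is_deriveB (dA t) (is_deriveZ c (dQ t t0)).
have cont : {within `[0, 1], continuous (A - c \*: Q)}%classic.
  apply/continuous_within_itvP; first exact: ltr01.
  split.
  - move=> t; rewrite in_itv /= => /andP[t0 t1].
    apply: differentiable_continuous; apply/derivable1_diffP.
    by case: (hdf t t0).
  - apply: cvgB; first exact: cvg_at_right_filter (contA 0).
    have -> : (c \*: Q) 0 = c *: 0 by rewrite /= /Q powR0 ?gt_eqF.
    apply: cvgZl_tmp; exact: powR_cvg0.
  - apply: cvg_at_left_filter.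
    apply: differentiable_continuous; apply/derivable1_diffP.
    by case: (hdf 1 ltr01).
have [t tI heq] := @MVT R (A - c \*: Q) df 0 1 ltr01
  (fun t tI => hdf t (andP tI).1) cont.
move: tI; rewrite in_itv /= => /andP[t0 t1].
have hle : df t <= 0.
  rewrite /df.
  have e1 : dotv (G (x + t *: w)) w - a = dotv (G (x + t *: w) - G x) w.
    by rewrite dotvBl.
  have e2 : norm2 (x + t *: w - x) = t * norm2 w.
    by rewrite addrC addKr norm2Z // ltW.
  have h2 := hH x (x + t *: w); rewrite e2 (powRM _ (ltW t0) (norm2_ge0 w)) in h2.
  have h3 := CSabs (G (x + t *: w) - G x) w.
  have h4 : s * dotv (G (x + t *: w) - G x) w <= `|dotv (G (x + t *: w) - G x) w|.
    by case: hs => ->; rewrite ?mul1r ?mulN1r ?ler_norm // -normrN ler_norm.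
  have e3 : c *: (p * powR t (p - 1)) = L * powR t v * powR (norm2 w) v * norm2 w.
    rewrite /GRing.scale /= /c /p addrAC subrr add0r.
    rewrite powRD ?powRr1 ?norm2_ge0 //; last by apply/implyP; rewrite gt_eqF.
    field; rewrite gt_eqF //; lra.
  rewrite e1 e3.
  have n0 := norm2_ge0 w.
  have h5 := ler_wpM2r n0 h2.
  lra.
move: heq; rewrite !subr0 mulr1 => heq.
have H : (s * (Phi (x + 1 *: w) - a * 1) - c * powR 1 p)
   - (s * (Phi (x + 0 *: w) - a * 0) - c * powR 0 p) = df t := heq.
rewrite scale1r scale0r addr0 mulr1 mulr0 subr0 powR0 ?gt_eqF // powR1 mulr0 mulr1 subr0 in H.
move: H hle; case: hs => ->; move=> H hle; lra.
Qed.
End Calc.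


Section Eps.
Variables (R : realType).

Lemma powR_scale (v t n : R) : 0 < v -> 0 <= t -> 0 <= n ->
  powR (t * n) (1 + v) = t * powR t v * powR n (1 + v).
Proof.
move=> v0 t0 n0; rewrite powRM // powRD ?powRr1 //.
by apply/implyP; rewrite gt_eqF //; lra.
Qed.

Lemma eps_lemma (v a b K : R) : 0 < v -> 0 <= K ->
  (forall t, 0 < t -> t <= 1 -> a <= b + K * powR t v) -> a <= b.
Proof.
move=> v0 K0 H; case: (leP a b) => // ab; exfalso.
have [Ke|Kp] := eqVneq K 0.
  by have := H 1 ltr01 (lexx _); rewrite Ke mul0r addr0; lra.
have Kp' : 0 < K by rewrite lt0r Kp.
pose m := Num.min ((a - b) / (2 * K)) 1.
have m0 : 0 < m.
  rewrite /m lt_min ltr01 andbT; apply: divr_gt0; lra.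
have m1 : m <= 1 by rewrite /m ge_min lexx orbT.
have mle : m <= (a - b) / (2 * K) by rewrite /m ge_min lexx.
pose t := powR m v^-1.
have t0 : 0 < t by apply: powR_gt0.
have t1 : t <= 1.
  have vi : 0 <= v^-1 by rewrite invr_ge0 ltW.
  have := @ge0_ler_powR R v^-1 vi m 1.
  rewrite /t powR1 => ->; rewrite ?nnegrE // ltW //.
have tv : powR t v = m by rewrite /t -powRrM mulVf ?gt_eqF // powRr1 // ltW.
have := H t t0 t1; rewrite tv => h.
have : K * m <= K * ((a - b) / (2 * K)) by rewrite ler_pM2l.
have -> : K * ((a - b) / (2 * K)) = (a - b) / 2 by field; rewrite gt_eqF.
lra.
Qed.
End Eps.

Section Grad.
Variables (R : realType) (d : nat) (Phi : 'rV[R]_d -> R) (G : 'rV[R]_d -> 'rV[R]_d).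
Variables (L v : R).
Hypotheses (hG : is_gradient Phi G) (L0 : 0 < L) (v0 : 0 < v)
  (hH : forall x y, norm2 (G y - G x) <= L * powR (norm2 (y - x)) v).

Lemma descent_t s (x w : 'rV[R]_d) (t : R) : (s = 1 \/ s = -1) -> 0 <= t ->
  s * (Phi (x + t *: w) - Phi x - t * dotv (G x) w) <=
  (L / (1 + v) * powR (norm2 w) (1 + v)) * (t * powR t v).
Proof.
move=> hs t0; have := descent hG x (t *: w) hs v0 hH.
rewrite dotvZr norm2Z // powR_scale ?norm2_ge0 //.
move=> h; apply: (le_trans h); rewrite le_eqVlt; apply/orP; left; apply/eqP; ring.
Qed.

Lemma grad_ineq : convex_fun Phi -> forall x y, Phi x + dotv (G x) (y - x) <= Phi y.
Proof.
move=> cvx x y.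
set K := L / (1 + v) * powR (norm2 (y - x)) (1 + v).
have K0 : 0 <= K.
  apply: mulr_ge0; last exact: powR_ge0.
  by apply: divr_ge0; [exact: ltW | rewrite addr_ge0 // ltW].
suff : dotv (G x) (y - x) <= Phi y - Phi x by lra.
apply: (@eps_lemma R v _ _ K v0 K0) => t t0 t1.
have hc := cvx y x t (ltW t0) t1.
have e : t *: y + (1 - t) *: x = x + t *: (y - x).
  by rewrite scalerBr scalerBl scale1r addrCA.
rewrite e in hc.
have hd := descent_t x (y - x) (or_intror erefl) (ltW t0).
rewrite -/K in hd.
rewrite -(ler_pM2l t0).
nra.
Qed.

Lemma opt_ineq (h : 'rV[R]_d -> R) (Lh : R) (xs : 'rV[R]_d) :
  (forall x y, `|h y - h x| <= Lh * norm2 (y - x)) ->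
  (forall y, Phi xs + h xs <= Phi y + h y) ->
  forall w, - dotv (G xs) w <= Lh * norm2 w.
Proof.
move=> hL hopt w.
set K := L / (1 + v) * powR (norm2 w) (1 + v).
have K0 : 0 <= K.
  apply: mulr_ge0; last exact: powR_ge0.
  by apply: divr_ge0; [exact: ltW | rewrite addr_ge0 // ltW].
apply: (@eps_lemma R v _ _ K v0 K0) => t t0 t1.
have hd := descent_t xs w (or_introl erefl) (ltW t0).
rewrite -/K in hd.
have ho := hopt (xs + t *: w).
have hl := hL xs (xs + t *: w).
have ew : xs + t *: w - xs = t *: w by rewrite addrAC subrr add0r.
rewrite ew (norm2Z _ (ltW t0)) in hl.
have hl' := le_trans (ler_norm _) hl.
rewrite -(ler_pM2l t0).
nra.
Qed.
End Grad.

Lemma dot_expand (R : realType) (d : nat) (a : R) (e w : 'rV[R]_d) :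
  dotv (e - a *: w) (e - a *: w) = dotv e e - 2 * a * dotv w e + a ^+ 2 * dotv w w.
Proof. rewrite dotvBl !dotvBr !dotvZl !dotvZr (dotvC e w); ring. Qed.

Unset Implicit Arguments.

Theorem corollary2p4 (R : realType) (d : nat)
  (Phi h : 'rV[R]_d -> R) (gradPhi gh : 'rV[R]_d -> 'rV[R]_d)
  (LPhi v Lh : R) (xstar x0 : 'rV[R]_d) (T : nat) (xs : nat -> 'rV[R]_d) :
  convex_fun Phi ->
  is_gradient Phi gradPhi ->
  continuous gradPhi ->
  0 < LPhi -> 0 < v -> v <= 1 ->
  (forall x y, norm2 (gradPhi y - gradPhi x) <= LPhi * powR (norm2 (y - x)) v) ->
  convex_fun h ->
  (forall x y, `|h y - h x| <= Lh * norm2 (y - x)) ->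
  (forall y, Phi xstar + h xstar <= Phi y + h y) ->
  (forall x, subgradient h x (gh x)) ->
  xs 0%N = x0 ->
  (forall k, xs k.+1 = xs k -
     (norm2 (x0 - xstar) / Num.sqrt (T.+1)%:R) *:
       ((norm2 (gradPhi (xs k) + gh (xs k)))^-1 *: (gradPhi (xs k) + gh (xs k)))) ->
  exists k : nat, (k <= T)%N /\
    (Phi (xs k) + h (xs k)) - (Phi xstar + h xstar) <=
      LPhi * powR (norm2 (x0 - xstar)) (v + 1)
        / ((v + 1) * powR (T.+1)%:R ((v + 1) / 2))
      + 2 * Lh * norm2 (x0 - xstar) / Num.sqrt (T.+1)%:R.
Proof.
move=> cvx hG _ L0 v0 v1 hH hcvx hL hopt hsub hx0 hstep.
set D := norm2 (x0 - xstar).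
set N : R := (T.+1)%:R.
set S := Num.sqrt N.
set al := D / S.
have N0 : 0 < N by rewrite /N ltr0n.
have S0 : 0 < S by rewrite /S sqrtr_gt0.
have p0 : v + 1 != 0 by rewrite gt_eqF //; lra.
have [D0|Dn0] := eqVneq D 0.
  have ex : x0 = xstar.
    by apply/eqP; rewrite -subr_eq0; apply/eqP; exact: norm2_eq0.
  exists 0%N; split => //.
  rewrite D0 powR0 // hx0 -ex subrr !mulr0 !mul0r addr0.
  by [].
have Dp : 0 < D by rewrite lt0r Dn0 norm2_ge0.
have alp : 0 < al by rewrite /al divr_gt0.
have Lh0 : 0 <= Lh.
  have := le_trans (normr_ge0 _) (hL xstar x0); rewrite -/D => hh.
  by rewrite -(pmulr_lge0 _ Dp).
pose g k := gradPhi (xs k) + gh (xs k).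
pose u k := (norm2 (g k))^-1 *: g k.
pose r k := dotv (u k) (xs k - xstar).
have huu k : dotv (u k) (u k) <= 1.
  rewrite /u dotvZl dotvZr -norm2_sq.
  have [->|n0] := eqVneq (norm2 (g k)) 0; first by rewrite invr0 mul0r ler01.
  have -> : (norm2 (g k))^-1 * ((norm2 (g k))^-1 * norm2 (g k) ^+ 2) = 1 by field.
  exact: lexx.
have step k : dotv (xs k.+1 - xstar) (xs k.+1 - xstar) =
    dotv (xs k - xstar) (xs k - xstar) - 2 * al * r k + al ^+ 2 * dotv (u k) (u k).
  have -> : xs k.+1 - xstar = (xs k - xstar) - al *: u k by rewrite hstep addrAC.
  by rewrite dot_expand.
have hal2 : al ^+ 2 * N = D ^+ 2.
  rewrite /al expr_div_n /S (sqr_sqrtr (ltW N0)); field; exact: lt0r_neq0.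
have [k [kT hr]] : exists k, (k <= T)%N /\ r k <= al.
  case: (pselect (exists k, (k <= T)%N /\ r k <= al)) => // hn; exfalso.
  have hall k : (k <= T)%N -> al < r k.
    move=> kT; rewrite ltNge; apply/negP => hk; apply: hn; by exists k.
  have P n : (n <= T)%N -> dotv (xs n - xstar) (xs n - xstar) <= D ^+ 2 - n%:R * al ^+ 2.
    elim: n => [|n IH] nT.
      by rewrite hx0 -norm2_sq mul0r subr0.
    have nT' : (n <= T)%N by apply: leq_trans nT.
    have := IH nT'; have := hall n nT'; have := huu n; rewrite step -natr1.
    have a2 : 0 < al ^+ 2 by rewrite exprn_gt0.
    move=> hu hrn hI.
    have := ler_wpM2l (ltW a2) hu; rewrite mulr1 => hu'.
    have : 2 * al * al < 2 * al * r n by rewrite ltr_pM2l // mulr_gt0.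
    nra.
  have := P T (leqnn T); have := hall T (leqnn T); have := huu T.
  have := step T; have := dotv_ge0 (xs T.+1 - xstar).
  have a2 : 0 < al ^+ 2 by rewrite exprn_gt0.
  move=> hge hst hu hrn hI.
  have := ler_wpM2l (ltW a2) hu; rewrite mulr1 => hu'.
  have : 2 * al * al < 2 * al * r T by rewrite ltr_pM2l // mulr_gt0.
  have e : D ^+ 2 - T%:R * al ^+ 2 = al ^+ 2 by rewrite -hal2 /N -natr1; ring.
  rewrite e in hI.
  nra.
exists k; split => //.
set xk := xs k.
have key y : Phi xk + h xk + dotv (g k) (y - xk) <= Phi y + h y.
  have h1 := grad_ineq hG L0 v0 hH cvx xk y.
  have h2 := hsub xk y.
  rewrite /g dotvDl; lra.
have eR : LPhi * powR D (v + 1) / ((v + 1) * powR N ((v + 1) / 2)) + 2 * Lh * D / S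
    = LPhi / (1 + v) * powR al (1 + v) + 2 * (Lh * al).
  have eN : powR N ((v + 1) / 2) = powR S (1 + v).
    by rewrite /S -powR12_sqrt ?ltW // -powRrM mulrC addrC.
  have eD : powR D (v + 1) = powR al (1 + v) * powR S (1 + v).
    by rewrite -powRM ?ltW // /al divfK ?gt_eqF // addrC.
  rewrite eN eD /al.
  have : 0 < powR S (1 + v) by apply: powR_gt0.
  move=> hp; field.
  by rewrite !gt_eqF //; lra.
rewrite eR.
have RHS0 : 0 <= LPhi / (1 + v) * powR al (1 + v) + 2 * (Lh * al).
  apply: addr_ge0; last by apply: mulr_ge0 => //; apply: mulr_ge0 => //; exact: ltW.
  apply: mulr_ge0; last exact: powR_ge0.
  by apply: divr_ge0; [exact: ltW | lra].
have [g0|gn0] := eqVneq (norm2 (g k)) 0.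
  have ge : g k = 0 by exact: norm2_eq0.
  have := key xstar; rewrite ge dot0v addr0 => hk.
  apply: le_trans RHS0; lra.
have ngp : 0 < norm2 (g k) by rewrite lt0r gn0 norm2_ge0.
have hdu : dotv (g k) (u k) = norm2 (g k).
  by rewrite /u dotvZr -norm2_sq; field.
have hrd : dotv (g k) (xk - xstar) = norm2 (g k) * r k.
  by rewrite /r /u dotvZl; field.
have r0 : 0 <= r k.
  have := key xstar; have := hopt xk.
  rewrite -opprB dotvNr hrd => ha hb.
  have : 0 <= norm2 (g k) * r k by lra.
  by rewrite pmulr_rge0.
set y := xstar + r k *: u k.
have hy : Phi xk + h xk <= Phi y + h y.
  have := key y.
  have -> : y - xk = - (xk - xstar) + r k *: u k by rewrite /y addrAC opprB.
  by rewrite dotvDr dotvNr dotvZr hdu hrd; lra.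
have nu : norm2 (u k) = 1.
  rewrite /norm2 /u dotvZl dotvZr -norm2_sq.
  have -> : (norm2 (g k))^-1 * ((norm2 (g k))^-1 * norm2 (g k) ^+ 2) = 1 by field.
  exact: sqrtr1.
have h2 := descent_t hG v0 hH xstar (u k) (or_introl erefl) r0.
rewrite nu powR1 mulr1 mul1r in h2.
have h3 := hL xstar y.
have ey : y - xstar = r k *: u k by rewrite /y addrAC subrr add0r.
rewrite ey norm2Z // nu mulr1 in h3.
have h4 := opt_ineq hG L0 v0 hH hL hopt (- u k).
rewrite dotvNr opprK norm2N nu mulr1 in h4.
have h3' := le_trans (ler_norm _) h3.
have pr : r k * powR (r k) v = powR (r k) (1 + v).
  by rewrite powRD ?powRr1 //; apply/implyP; rewrite gt_eqF //; lra.
have pal : powR (r k) (1 + v) <= powR al (1 + v).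
  have v1p : 0 <= 1 + v by lra.
  by apply: (ge0_ler_powR v1p) => //; rewrite nnegrE ?ltW //.
have K0 : 0 <= LPhi / (1 + v) by apply: divr_ge0; lra.
have b1 := ler_wpM2l K0 pal.
have b2 := ler_wpM2l Lh0 hr.
rewrite -pr in b1.
have b3 := ler_wpM2l r0 h4.
rewrite -/y in h2.
lra.
Qed.
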